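(* Let $S=K[x_1,\dots,x_n]$ with $K$ infinite, $M$ a finitely generated graded $S$-module and $y_1,\dots,y_n$ generic linear forms for $M$. For all integers $i\ge1$, $k\ge 0$ and $1\le p\le n$, $$h_{i,i+k}(p)=\sum_{j=1}^{p-i+1}\binom{p-j}{i-1}\alpha_{j,k}-\sum_{(a,b)\in A_{i,p}}\left[\binom{p-b-1}{i-a}\delta_{a,b,a+k}+\binom{p-b-1}{i-a-1}\delta_{a,b,a+k+1}\right],$$ where $A_{i,p}=\{(a,b)\in\mathbb N^2: 1\le b\le p-1,\ \max\{i-p+b,1\}\le a\le i\}$.
   Context: For $p=1,\dots,n$ let $A_p=\big((y_1,\dots,y_{p-1})M:_M y_p\big)/(y_1,\dots,y_{p-1})M$, a graded module of finite length, and $\alpha_{p,j}=\dim_K(A_p)_j$ (generic graded annihilator numbers). $H_i(p)=H_i(y_1,\dots,y_p;M)$ is Koszul homology and $h_{ij}(p)=\dim_K H_i(p)_j$. For $1\le b\le n-1$, $\phi_{a,b}:H_a(b)\to H_a(b)$ is the degree-raising map given by multiplication by $\pm y_{b+1}$ appearing in the long exact Koszul homology sequence $\cdots\to H_a(b)\xrightarrow{\phi_{a,b}}H_a(b)\to H_a(b+1)\to H_{a-1}(b)\to\cdots$, and $\delta_{a,b,c}=\dim_K(\mathrm{Im}\,\phi_{a,b})_c$. Binomial coefficients $\binom{m}{r}$ are $0$ if $r<0$ or $r>m$. *)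

(* Defs.v *)
From HB Require Import structures.
From mathcomp Require Import all_boot all_order all_algebra.
From mathcomp Require Import mpoly.
Unset Printing Implicit Defensive.
Import GRing.Theory.
Local Open Scope ring_scope.

Definition K_infinite (K : fieldType) : Prop :=
  forall s : seq K, exists x : K, x \notin s.

Definition binz (a : nat) (r : int) : nat :=
  match r with Posz r' => 'C(a, r') | Negz _ => 0%N end.

Section GradedModule.
Context {K : fieldType} {n : nat} {m : int -> nat}.
(* M_e = 'rV[K]_(m e);  x_k acts M_e -> M_(e+1) by v |-> v *m X k e *)
Variable X : forall (k : 'I_n) (e : int), 'M[K]_(m e, m (e + 1)).

(* the variables act by commuting maps: this is a graded S-module *)
Definition graded_module : Prop :=
  forall (k l : 'I_n) (e : int), X k e *m X l (e + 1) = X l e *m X k (e + 1).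

(* finitely generated: bounded below, and generated in degrees <= d1 *)
Definition fin_generated : Prop :=
  (exists d0 : int, forall e : int, e < d0 -> m e = 0%N) /\
  (exists d1 : int, forall e : int, d1 <= e ->
     forall v : 'rV[K]_(m (e + 1)),
       exists u : 'I_n -> 'rV[K]_(m e), v = \sum_k u k *m X k e).

(* x_k : M_e -> M_e' (meaningful when e' = e + 1, zero otherwise) *)
Definition Xto (k : 'I_n) (e e' : int) : 'M[K]_(m e, m e') :=
  match (e + 1 =P e') with
  | ReflectT H => castmx (erefl, congr1 m H) (X k e)
  | ReflectF _ => 0
  end.

Definition Ymx (cf : 'I_n -> K) (e e' : int) : 'M[K]_(m e, m e') :=
  \sum_k cf k *: Xto k e e'.

(* The sequence y_1..y_n is given by a matrix C: y_(t+1) = sum_k C t k x_k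
   (0-based row t). *)
Definition ycoef (C : 'M[K]_n) (l : nat) : 'I_n -> K :=
  fun k => oapp (fun t : 'I_n => C t k) 0 (insub l).

(* Koszul complex K(y_1..y_p; M): a chain of homological degree i and
   module degree e is a family (f F)_F, F ranging over i-subsets of
   {0..p-1} (0-based indices of y_1..y_p), with f F in M_e. *)
Definition Ch (e : int) := {ffun {set 'I_n} -> 'rV[K]_(m e)}.

Definition goodF (p i : nat) (F : {set 'I_n}) : bool :=
  (F \subset [set t : 'I_n | (t < p)%N]) && (#|F| == i).

Definition chproj (p i : nat) (e : int) (f : Ch e) : Ch e :=
  [ffun F => if goodF p i F then f F else 0].

Definition Kch (p i : nat) (e : int) : {vspace Ch e} :=
  limg (linfun (chproj p i e)).

Definition kdiff (C : 'M[K]_n) (p i : nat) (e e' : int) (f : Ch e) : Ch e' :=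
  [ffun G : {set 'I_n} =>
     if (0 < i)%N && goodF p i.-1 G then
       \sum_(t : 'I_n | (t < p)%N && (t \notin G))
          (-1) ^+ #|[set s in G | (s < t)%N]| *: (f (t |: G) *m Ymx (C t) e e')
     else 0].

Definition Zcyc (C : 'M[K]_n) (p i : nat) (e : int) : {vspace Ch e} :=
  (lker (linfun (kdiff C p i e (e + 1))) :&: Kch p i e)%VS.
Definition Bbd (C : 'M[K]_n) (p i : nat) (e : int) : {vspace Ch e} :=
  (linfun (kdiff C p i.+1 (e - 1) e) @: Kch p i.+1 (e - 1))%VS.

(* h_{ij}(p) = dim_K H_i(y_1..y_p; M)_j  (internal degree j = e + i) *)
Definition hK (C : 'M[K]_n) (p i : nat) (j : int) : nat :=
  (\dim (Zcyc C p i (j - i%:Z)) - \dim (Bbd C p i (j - i%:Z)))%N.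

Definition mulch (cf : 'I_n -> K) (e e' : int) (f : Ch e) : Ch e' :=
  [ffun F => f F *m Ymx cf e e'].

(* delta_{a,b,c} = dim (Im phi_{a,b})_c, phi_{a,b} = mult. by y_(b+1)
   on H_a(b):  Im in degree c = (y_(b+1) Z_(c-1) + B_c) / B_c *)
Definition delta (C : 'M[K]_n) (a b : nat) (c : int) : nat :=
  let e := c - a%:Z in
  (\dim (linfun (mulch (ycoef C b) (e - 1) e) @: Zcyc C b a (e - 1)
          + Bbd C b a e)%VS
   - \dim (Bbd C b a e))%N.

Definition idealM (C : 'M[K]_n) (p : nat) (d : int) : {vspace 'rV[K]_(m d)} :=
  (\sum_(t < n | (t < p.-1)%N)
      limg (linfun (mulmxr (Ymx (C t) (d - 1) d))))%VS.

(* alpha_{p,j} = dim ((y_1..y_(p-1))M :_M y_p / (y_1..y_(p-1))M)_j *)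
Definition alpha (C : 'M[K]_n) (p : nat) (j : int) : nat :=
  (\dim (linfun (mulmxr (Ymx (ycoef C p.-1) j (j + 1))) @^-1: idealM C p (j + 1))%VS
   - \dim (idealM C p j))%N.

End GradedModule.

(* Main.v *)
Require Import Defs.
From HB Require Import structures.
From mathcomp Require Import all_boot all_order all_algebra.
From mathcomp Require Import zify ring.
From mathcomp Require Import mpoly.
Import GRing.Theory.
Local Open Scope ring_scope.
Set Implicit Arguments.
Unset Strict Implicit.
Lemma lfunE' (K : fieldType) (aT rT : vectType K) (f : aT -> rT) :
  linear f -> forall v, linfun f v = f v.
Proof.
move=> lf v.
pose F := GRing.isLinear.Build K aT rT _ f lf.
pose g : {linear aT -> rT} := HB.pack f F.
exact: (lfunE g v).
Qed.
Section Good.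
Variable n : nat.
Implicit Types (F G : {set 'I_n}) (t q : 'I_n).

Lemma goodF_sub p i F t : goodF p i F -> t \in F -> (t < p)%N.
Proof. by case/andP=> /subsetP H _ /H; rewrite inE. Qed.

Lemma goodF_U1 p i G t : (t < p)%N -> t \notin G ->
  goodF p i.+1 (t |: G) = goodF p i G.
Proof.
move=> ht tG; rewrite /goodF subUset sub1set inE ht /= cardsU1 tG add1n eqSS.
by [].
Qed.

Lemma goodF_notin p i G q : nat_of_ord q = p -> q \notin G -> goodF p.+1 i G = goodF p i G.
Proof.
move=> hq qG; rewrite /goodF; congr (_ && _).
apply/subsetP/subsetP => H t tG; move: (H t tG); rewrite !inE //.
rewrite ltnS leq_eqVlt; case/orP=> // /eqP ht.
have htq : t = q by apply: val_inj; rewrite /= ht hq.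
by move: qG; rewrite -htq tG.
move=> /ltnW; by [].
Qed.

Lemma goodF_notq p i G q : nat_of_ord q = p -> goodF p i G -> q \notin G.
Proof.
move=> hq gG; apply/negP => /(goodF_sub gG); by rewrite hq ltnn.
Qed.

Lemma goodF_in p i F q : nat_of_ord q = p -> q \in F ->
  goodF p.+1 i.+1 F = goodF p i (F :\ q).
Proof.
move=> hq qF; rewrite -{1}(setD1K qF) goodF_U1 ?hq ?setD11 //.
by rewrite (goodF_notin _ hq) // setD11.
Qed.

Lemma goodF0 p G : goodF p 0 G = (G == set0).
Proof.
rewrite /goodF cards_eq0; case: eqP => [->|]; rewrite ?andbF ?andbT //.
by rewrite sub0set.
Qed.

Lemma goodF_mono p i F : goodF p i F -> goodF p.+1 i F.
Proof.
case/andP=> /subsetP H hc; rewrite /goodF hc andbT; apply/subsetP=> t /H; rewrite !inE.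
move=> /ltnW; by [].
Qed.
End Good.
Section Comb.
Variables (A : nat -> nat) (D0 D1 : nat -> nat -> nat).

Lemma binz_neg k r : r < 0 -> binz k r = 0%N.
Proof. by case: r. Qed.

Lemma binzS k r : binz k.+1 r = (binz k r + binz k (r - 1))%N.
Proof.
case: r => [[|r]|r].
- by rewrite (binz_neg _ (r := 0 - 1)) //= !bin0.
- have -> : (Posz r.+1 - 1 = Posz r) by rewrite -addn1 PoszD addrK.
  by rewrite /= binS addnC.
- by rewrite (binz_neg _ (r := Negz r - 1)) //; lia.
Qed.

Lemma binz0 r : binz 0 r = (r == 0).
Proof. by case: r => [[|r]|r]. Qed.

Definition GA p i := \sum_(j < p) ('C(p - j.+1, i.-1) * A j.+1)%N%:Z.
Definition GDb p i b := \sum_(a < i)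
  (binz (p - b - 1) (i%:Z - a.+1%:Z) * D0 a.+1 b
   + binz (p - b - 1) (i%:Z - a.+1%:Z - 1) * D1 a.+1 b)%N%:Z.
Definition GD p i := \sum_(b < p) GDb p i b.
Definition Gc p i := GA p i - GD p i.

Lemma GA_S p i : GA p.+1 i.+1 = GA p i.+1 + (if i is i'.+1 then GA p i else (A p.+1)%:Z).
Proof.
rewrite /GA big_ord_recr /= subnn.
have Ej (j : 'I_p) : (p.+1 - (widen_ord (leqnSn p) j).+1 = (p - j.+1).+1)%N.
  by rewrite /= subSS subnSK.
under eq_bigr => j _ do rewrite Ej.
case: i => [|i] /=.
  rewrite bin0 mul1n; congr (_ + _); apply: eq_bigr => j _; by rewrite !bin0.
rewrite bin0n /= mul0n addr0 -big_split /=; apply: eq_bigr => j _.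
by rewrite binS mulnDl PoszD.
Qed.

Definition T2 n0 i b (a : nat) := (binz n0 (i.+1%:Z - a.+1%:Z - 1) * D0 a.+1 b
   + binz n0 (i.+1%:Z - a.+1%:Z - 1 - 1) * D1 a.+1 b)%N%:Z.

Lemma GDb_S p i (b : nat) : (b < p)%N ->
  GDb p.+1 i.+1 b = GDb p i.+1 b + (if i is i'.+1 then GDb p i b else 0).
Proof.
move=> bp; rewrite /GDb.
have Eb : (p.+1 - b - 1 = (p - b - 1).+1)%N by lia.
rewrite Eb; set n0 := (p - b - 1)%N.
rewrite (eq_bigr (fun a : 'I_i.+1 => (binz n0 (i.+1%:Z - a.+1%:Z) * D0 a.+1 b
   + binz n0 (i.+1%:Z - a.+1%:Z - 1) * D1 a.+1 b)%N%:Z + T2 n0 i b a)); last first.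
  by move=> a _; rewrite /T2 -PoszD !binzS !mulnDl addnACA.
rewrite big_split /=; congr (_ + _).
case: i => [|i].
  by rewrite big_ord1 /T2 /= !mul0n.
rewrite big_ord_recr /=.
have -> : T2 n0 i.+1 b i.+1 = 0 by rewrite /T2 !binz_neg //; lia.
rewrite addr0; apply: eq_bigr => a _; rewrite /T2 /=.
have e1 : (i.+2%:Z - (a.+1)%:Z - 1 = i.+1%:Z - (a.+1)%:Z) by lia.
by rewrite e1.
Qed.

Lemma GDb_p p i : GDb p.+1 i.+1 p =
  (D0 i.+1 p)%:Z + (if i is i'.+1 then (D1 i'.+1 p)%:Z else 0).
Proof.
rewrite /GDb (_ : (p.+1 - p - 1 = 0)%N); last by lia.
under eq_bigr => a _ do rewrite !binz0.
rewrite big_ord_recr /=.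
have -> : (i.+1%:Z - i.+1%:Z == 0) = true by rewrite subrr.
have -> : (i.+1%:Z - i.+1%:Z - 1 == 0) = false by rewrite subrr.
rewrite mul1n mul0n addn0 addrC; congr (_ + _).
case: i => [|i]; first by rewrite big_ord0.
rewrite big_ord_recr /= big1 ?add0r.
  have -> : (i.+2%:Z - i.+1%:Z == 0) = false by apply/negbTE/eqP; lia.
  have -> : (i.+2%:Z - i.+1%:Z - 1 == 0) = true by apply/eqP; lia.
  by rewrite mul0n add0n mul1n.
move=> a _ /=; have ha := ltn_ord a.
have -> : (i.+2%:Z - a.+1%:Z == 0) = false by apply/negbTE/eqP; lia.
have -> : (i.+2%:Z - a.+1%:Z - 1 == 0) = false by apply/negbTE/eqP; lia.
by rewrite !mul0n.
Qed.

Lemma Gc_S p i : Gc p.+1 i.+1 = Gc p i.+1 - (D0 i.+1 p)%:Z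
  + (if i is i'.+1 then Gc p i'.+1 - (D1 i'.+1 p)%:Z else (A p.+1)%:Z).
Proof.
rewrite /Gc GA_S /GD big_ord_recr /= GDb_p.
rewrite (eq_bigr (fun b : 'I_p => GDb p i.+1 b + (if i is i'.+1 then GDb p i b else 0))); last first.
  by move=> b _; rewrite GDb_S.
rewrite big_split /=.
case: i => [|i] /=; last by ring.
rewrite big1_eq; ring.
Qed.

Lemma comb (N : nat) (H : nat -> nat -> nat) :
  (forall i, H 0 i.+1 = 0%N) ->
  (forall p i, (p < N)%N -> (H p.+1 i.+1)%:Z = (H p i.+1)%:Z - (D0 i.+1 p)%:Z
     + (if i is i'.+1 then (H p i'.+1)%:Z - (D1 i'.+1 p)%:Z else (A p.+1)%:Z)) ->
  forall p, (p <= N)%N -> forall i, (H p i.+1)%:Z = Gc p i.+1.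
Proof.
move=> H0 HR; elim=> [|p IH] pN i.
  by rewrite H0 /Gc /GA /GD !big_ord0 subrr.
rewrite HR // Gc_S IH ?(ltnW pN) //; case: i => [|i] //.
by rewrite IH ?(ltnW pN).
Qed.

Lemma sum_extr (f : nat -> int) l u v : (u <= v)%N ->
  (forall j, (u <= j < v)%N -> f j = 0) ->
  \sum_(l <= j < u) f j = \sum_(l <= j < v) f j.
Proof.
move=> uv H; case: (leqP l u) => lu.
  rewrite (big_cat_nat lu uv) /= [X in _ + X](_ : _ = 0) ?addr0 //.
  by rewrite big_nat big1 // => j /H.
rewrite big_geq ?(ltnW lu) // big_nat big1 // => j /andP [lj jv].
by apply: H; rewrite jv andbT; apply: leq_trans (ltnW lu) lj.
Qed.

Lemma sum_extl (f : nat -> int) l u v : (l <= u)%N ->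
  (forall j, (l <= j < u)%N -> f j = 0) ->
  \sum_(l <= j < v) f j = \sum_(u <= j < v) f j.
Proof.
move=> lu H; case: (leqP u v) => uv.
  rewrite (big_cat_nat lu uv) /= [X in X + _](_ : _ = 0) ?add0r //.
  by rewrite big_nat big1 // => j /H.
rewrite [RHS]big_geq ?(ltnW uv) // big_nat big1 // => j /andP [lj jv].
by apply: H; rewrite lj /=; apply: leq_trans jv (ltnW uv).
Qed.

Lemma binz_gt k r : k%:Z < r -> binz k r = 0%N.
Proof. by case: r => // r /= h; rewrite bin_small //; rewrite ltz_nat in h. Qed.

Lemma SA_GA p i :
  \sum_(1 <= j < p.+2 - i.+1) ('C(p - j, i.+1 - 1) * A j)%N%:Z = GA p i.+1.
Proof.
rewrite (@sum_extr _ 1 _ p.+1); first last.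
- move=> j /andP [hj1 hj2]; rewrite bin_small ?mul0n //; lia.
- lia.
by rewrite big_add1 /= big_mkord subn1.
Qed.

Lemma SD_GD p i : (forall a, D0 a.+1 0 = 0%N) -> (forall a, D1 a.+1 0 = 0%N) ->
  \sum_(1 <= b < p) \sum_(maxn (i.+1 + b - p) 1 <= a < i.+2)
    (binz (p - b - 1) (i.+1%:Z - a%:Z) * D0 a b
     + binz (p - b - 1) (i.+1%:Z - a%:Z - 1) * D1 a b)%N%:Z = GD p i.+1.
Proof.
move=> hD0 hD1; rewrite /GD -(big_mkord xpredT (GDb p i.+1)).
case: p => [|p]; first by rewrite !big_geq.
rewrite [RHS]big_ltn // [X in _ = X + _](_ : _ = 0); last first.
  by rewrite /GDb big1 // => a _; rewrite hD0 hD1 !muln0.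
rewrite add0r; apply: eq_big_nat => b /andP [b1 bp].
rewrite -(@sum_extl _ 1); rewrite ?leq_maxr //; last first.
  move=> a /andP [a1 ha].
  rewrite !binz_gt ?muln0 ?mul0n //; lia.
by rewrite big_add1 /= big_mkord.
Qed.
End Comb.
Section Main.
Variables (K : fieldType) (n : nat) (m : int -> nat).
Variable X : forall (k : 'I_n) (e : int), 'M[K]_(m e, m (e + 1)).
Hypothesis gmX : graded_module X.
Variable C : 'M[K]_n.

Local Notation Ch := (@Ch K n m).
Local Notation Kch := (@Kch K n m).
Local Notation chproj := (@chproj K n m).
Local Notation kd := (kdiff X C).
Local Notation Y := (Ymx X).
Local Notation mulch := (mulch X).

Lemma Xto_comm k l e e' e'' :
  Xto X k e e' *m Xto X l e' e'' = Xto X l e e' *m Xto X k e' e''.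
Proof.
rewrite /Xto; case: (e + 1 =P e') => [H|H]; last by rewrite !mul0mx.
case: (e' + 1 =P e'') => [H'|H']; last by rewrite !mulmx0.
subst e' e''; rewrite !castmx_id; exact: gmX.
Qed.

Lemma Ymx_comm a b e e' e'' :
  Y a e e' *m Y b e' e'' = Y b e e' *m Y a e' e''.
Proof.
rewrite /Ymx !mulmx_suml.
under eq_bigr do rewrite mulmx_sumr.
under [RHS]eq_bigr do rewrite mulmx_sumr.
rewrite [RHS]exchange_big /=.
apply: eq_bigr => k _; apply: eq_bigr => l _.
by rewrite -!scalemxAl -!scalemxAr !scalerA Xto_comm mulrC.
Qed.

Lemma chproj_lin p i e : linear (chproj p i e).
Proof.
move=> a f g; apply/ffunP=> F; rewrite !ffunE; case: ifP => _ //.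
by rewrite scaler0 addr0.
Qed.

Lemma kd_lin p i e e' : linear (kd p i e e').
Proof.
move=> a f g; apply/ffunP=> G; rewrite !ffunE; case: ifP => _; last by rewrite scaler0 addr0.
rewrite scaler_sumr -big_split /=; apply: eq_bigr => t _.
by rewrite !ffunE mulmxDl scalerDr -scalemxAl !scalerA mulrC.
Qed.

Lemma mulch_lin cf e e' : linear (mulch cf e e').
Proof.
by move=> a f g; apply/ffunP=> G; rewrite !ffunE mulmxDl -scalemxAl.
Qed.

Definition piq (q : 'I_n) e (f : Ch e) : Ch e :=
  [ffun G : {set 'I_n} => if q \notin G then f (q |: G) else 0].
Definition liftq (q : 'I_n) e (g : Ch e) : Ch e :=
  [ffun F : {set 'I_n} => if q \in F then g (F :\ q) else 0].

Lemma piq_lin q e : linear (@piq q e).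
Proof.
move=> a f g; apply/ffunP=> F; rewrite !ffunE; case: ifP => _ //.
by rewrite scaler0 addr0.
Qed.

Lemma liftq_lin q e : linear (@liftq q e).
Proof.
move=> a f g; apply/ffunP=> F; rewrite !ffunE; case: ifP => _ //.
by rewrite scaler0 addr0.
Qed.

Lemma memKP p i e (x : Ch e) :
  reflect (forall F, ~~ goodF p i F -> x F = 0) (x \in Kch p i e).
Proof.
apply: (iffP memv_imgP) => [[u _ ->] F nF | H].
  by rewrite lfunE' ?ffunE ?(negbTE nF) //; exact: chproj_lin.
exists x; first exact: memvf.
rewrite lfunE'; last exact: chproj_lin.
apply/ffunP => F; rewrite ffunE; case: ifP => // /negbT /H ->; by [].
Qed.

Lemma chprojK p i e (x : Ch e) : x \in Kch p i e -> chproj p i e x = x.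
Proof.
move/memKP=> H; apply/ffunP=> F; rewrite ffunE; case: ifP => // /negbT /H ->; by [].
Qed.

Lemma chproj_K p i e (x : Ch e) : chproj p i e x \in Kch p i e.
Proof. by apply/memKP => F nF; rewrite ffunE (negbTE nF). Qed.

Lemma chprojE p i e (x : Ch e) F : chproj p i e x F = if goodF p i F then x F else 0.
Proof. by rewrite ffunE. Qed.

Lemma kd_K p i e e' (x : Ch e) : kd p i e e' x \in Kch p i.-1 e'.
Proof.
apply/memKP => F nF; rewrite ffunE (negbTE nF) andbF; by [].
Qed.

Lemma kd_chproj p i e e' (x : Ch e) : kd p i e e' (chproj p i e x) = kd p i e e' x.
Proof.
apply/ffunP => G; rewrite !ffunE; case: ifP => // /andP [].
case: i x => // i x _ /= gG; apply: eq_bigr => t /andP [tp tG].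
by rewrite ffunE goodF_U1 ?gG.
Qed.

Lemma mulch_K p i e e' cf (x : Ch e) : x \in Kch p i e -> mulch cf e e' x \in Kch p i e'.
Proof.
move/memKP=> H; apply/memKP => F nF; by rewrite ffunE H ?mul0mx.
Qed.

Lemma K_S p i e (x : Ch e) : x \in Kch p i e -> x \in Kch p.+1 i e.
Proof.
move/memKP=> H; apply/memKP => F nF; apply: H; apply: contra nF; exact: goodF_mono.
Qed.

Section Q.
Variables (p : nat) (q : 'I_n).
Hypothesis hq : nat_of_ord q = p.

Lemma K_noq i e (x : Ch e) (G : {set 'I_n}) : x \in Kch p i e -> q \in G -> x G = 0.
Proof.
move/memKP=> H qG; apply: H; apply/negP => /(goodF_notq hq); by rewrite qG.
Qed.

Lemma piq_K0 i e (x : Ch e) : x \in Kch p i e -> piq q x = 0.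
Proof.
move=> xK; apply/ffunP => G; rewrite !ffunE; case: ifP => // qG.
by rewrite (K_noq xK) ?setU11.
Qed.

Lemma piq_lift e (g : Ch e) : (forall G : {set 'I_n}, q \in G -> g G = 0) -> piq q (liftq q g) = g.
Proof.
move=> H; apply/ffunP => G; rewrite !ffunE; case: ifP => qG.
  by rewrite setU11 setU1K.
by rewrite H //; move/negbT: qG; rewrite negbK.
Qed.

Lemma chproj_lift i e (g : Ch e) : chproj p i e (liftq q g) = 0.
Proof.
apply/ffunP => F; rewrite !ffunE; case: ifP => // gF; case: ifP => // qF.
by move: (goodF_notq hq gF); rewrite qF.
Qed.

Lemma lift_K i e (g : Ch e) : g \in Kch p i e -> liftq q g \in Kch p.+1 i.+1 e.
Proof.
move/memKP => H; apply/memKP => F nF; rewrite ffunE; case: ifP => // qF.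
by apply: H; rewrite -(goodF_in _ hq qF).
Qed.

Lemma piq_K i e (f : Ch e) : f \in Kch p.+1 i.+1 e -> piq q f \in Kch p i e.
Proof.
move/memKP => H; apply/memKP => G nG; rewrite ffunE; case: ifP => // qG.
by apply: H; rewrite goodF_U1 ?hq // (goodF_notin _ hq).
Qed.

Lemma decomp i e (f : Ch e) : f \in Kch p.+1 i.+1 e ->
  f = chproj p i.+1 e f + liftq q (piq q f).
Proof.
move=> fK; apply/ffunP => F; rewrite !ffunE.
case: (boolP (q \in F)) => qF.
  have nF : ~~ goodF p i.+1 F by apply/negP => /(goodF_notq hq); rewrite qF.
  by rewrite (negbTE nF) add0r setD11 setD1K.
rewrite addr0; case: ifP => // gF.
by move/memKP: fK => ->//; rewrite (goodF_notin _ hq qF) gF.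
Qed.

End Q.

Section Q2.
Variables (p : nat) (q : 'I_n).
Hypothesis hq : nat_of_ord q = p.

Lemma ltS_q (t : 'I_n) : (t < p.+1)%N = (t == q) || (t < p)%N.
Proof. by rewrite ltnS leq_eqVlt -hq. Qed.

Lemma lt_neq_q (t : 'I_n) : (t < p)%N -> t != q.
Proof. by move=> tp; apply/eqP => tq; move: tp; rewrite tq hq ltnn. Qed.

Lemma DF i e e' (f : Ch e) : f \in Kch p.+1 i.+1 e ->
  kd p.+1 i.+1 e e' f = kd p i.+1 e e' (chproj p i.+1 e f)
     + liftq q (kd p i e e' (piq q f)) + (-1) ^+ i *: mulch (C q) e e' (piq q f).
Proof.
move=> fK; apply/ffunP => G; rewrite !ffunE /=.
case: (boolP (q \in G)) => qG.
  rewrite mul0mx scaler0 addr0.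
  have -> : goodF p i G = false by apply/negP => /(goodF_notq hq); rewrite qG.
  rewrite add0r; case: i fK => [|i] fK.
    by rewrite goodF0; case: eqP => // G0; move: qG; rewrite G0 inE.
  rewrite (goodF_in _ hq qG) /=; case: ifP => // gG.
  apply: eq_big => [t|t /andP [tp tG]].
    rewrite in_setD1 negb_and negbK ltS_q; case: (t =P q) => [->|_] /=.
      by rewrite qG hq ltnn.
    by [].
  have tq : t != q by apply: contraNneq tG => ->.
  move: tp; rewrite ltS_q (negbTE tq) /= => tp.
  rewrite ffunE in_setU1 setD11 orbF eq_sym tq /=.
  rewrite setUCA (setD1K qG); congr (_ *: _).
  congr (_ ^+ _).
  congr (#|pred_of_set _|); apply/setP => s; rewrite !inE; case: (s =P q) => [->|] //=.
  by rewrite qG /= hq; apply/negbTE; rewrite -leqNgt ltnW.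
rewrite addr0 -(goodF_notin _ hq qG) /=.
case: ifP => gG; last first.
  move/memKP: fK => ->; first by rewrite mul0mx scaler0 addr0.
  by rewrite goodF_U1 ?gG // hq.
rewrite (bigD1 q) /=; last by rewrite ltS_q eqxx qG.
rewrite addrC; congr (_ + _).
  apply: eq_big => [t|t].
    rewrite ltS_q andbC andbA; case: (t =P q) => [->|_] /=.
      by rewrite hq ltnn ?andbF.
    by rewrite andbC.
  move=> /andP [/andP [tp tG] tq].
  rewrite ltS_q (negbTE tq) /= in tp.
  by rewrite ffunE goodF_U1 // -(goodF_notin _ hq qG) gG.
congr (_ *: _); congr (_ ^+ _).
have -> : [set s in G | (s < q)%N] = G.
  apply/setP => s; rewrite !inE; apply: andb_idr => sG.
  have gG' : goodF p i G by rewrite -(goodF_notin _ hq qG).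
  by rewrite hq; apply: (goodF_sub gG').
by case/andP: gG => _ /eqP.
Qed.
End Q2.
HB.instance Definition _ (p i : nat) (e : int) := GRing.isLinear.Build K (Ch e) (Ch e) _ (chproj p i e) (@chproj_lin p i e).
HB.instance Definition _ (p i : nat) (e e' : int) := GRing.isLinear.Build K (Ch e) (Ch e') _ (kd p i e e') (@kd_lin p i e e').
HB.instance Definition _ (cf : 'I_n -> K) (e e' : int) := GRing.isLinear.Build K (Ch e) (Ch e') _ (mulch cf e e') (@mulch_lin cf e e').
HB.instance Definition _ (q : 'I_n) (e : int) := GRing.isLinear.Build K (Ch e) (Ch e) _ (@piq q e) (@piq_lin q e).
HB.instance Definition _ (q : 'I_n) (e : int) := GRing.isLinear.Build K (Ch e) (Ch e) _ (@liftq q e) (@liftq_lin q e).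

Lemma chprojD p i e (x y : Ch e) : chproj p i e (x + y) = chproj p i e x + chproj p i e y. Proof. exact: linearD. Qed.
Lemma chprojB p i e (x y : Ch e) : chproj p i e (x - y) = chproj p i e x - chproj p i e y. Proof. exact: linearB. Qed.
Lemma chprojN p i e (x : Ch e) : chproj p i e (- x) = - chproj p i e x. Proof. exact: linearN. Qed.
Lemma chprojZ p i e (a : K) (x : Ch e) : chproj p i e (a *: x) = a *: chproj p i e x. Proof. exact: linearZ. Qed.
Lemma chproj0 p i e : chproj p i e 0 = 0 :> Ch e. Proof. exact: linear0. Qed.
Lemma kdD p i e e' (x y : Ch e) : kd p i e e' (x + y) = kd p i e e' x + kd p i e e' y. Proof. exact: linearD. Qed.
Lemma kdB p i e e' (x y : Ch e) : kd p i e e' (x - y) = kd p i e e' x - kd p i e e' y. Proof. exact: linearB. Qed.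
Lemma kdN p i e e' (x : Ch e) : kd p i e e' (- x) = - kd p i e e' x. Proof. exact: linearN. Qed.
Lemma kdZ p i e e' (a : K) (x : Ch e) : kd p i e e' (a *: x) = a *: kd p i e e' x. Proof. exact: linearZ. Qed.
Lemma kd0 p i e e' : kd p i e e' 0 = 0 :> Ch e'. Proof. exact: linear0. Qed.
Lemma mulchD cf e e' (x y : Ch e) : mulch cf e e' (x + y) = mulch cf e e' x + mulch cf e e' y. Proof. exact: linearD. Qed.
Lemma mulchB cf e e' (x y : Ch e) : mulch cf e e' (x - y) = mulch cf e e' x - mulch cf e e' y. Proof. exact: linearB. Qed.
Lemma mulchN cf e e' (x : Ch e) : mulch cf e e' (- x) = - mulch cf e e' x. Proof. exact: linearN. Qed.
Lemma mulchZ cf e e' (a : K) (x : Ch e) : mulch cf e e' (a *: x) = a *: mulch cf e e' x. Proof. exact: linearZ. Qed.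
Lemma mulch0 cf e e' : mulch cf e e' 0 = 0 :> Ch e'. Proof. exact: linear0. Qed.
Lemma piqD q e (x y : Ch e) : @piq q e (x + y) = @piq q e x + @piq q e y. Proof. exact: linearD. Qed.
Lemma piqB q e (x y : Ch e) : @piq q e (x - y) = @piq q e x - @piq q e y. Proof. exact: linearB. Qed.
Lemma piqN q e (x : Ch e) : @piq q e (- x) = - @piq q e x. Proof. exact: linearN. Qed.
Lemma piqZ q e (a : K) (x : Ch e) : @piq q e (a *: x) = a *: @piq q e x. Proof. exact: linearZ. Qed.
Lemma piq0 q e : @piq q e 0 = 0 :> Ch e. Proof. exact: linear0. Qed.
Lemma liftqD q e (x y : Ch e) : @liftq q e (x + y) = @liftq q e x + @liftq q e y. Proof. exact: linearD. Qed.
Lemma liftqB q e (x y : Ch e) : @liftq q e (x - y) = @liftq q e x - @liftq q e y. Proof. exact: linearB. Qed.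
Lemma liftqN q e (x : Ch e) : @liftq q e (- x) = - @liftq q e x. Proof. exact: linearN. Qed.
Lemma liftqZ q e (a : K) (x : Ch e) : @liftq q e (a *: x) = a *: @liftq q e x. Proof. exact: linearZ. Qed.
Lemma liftq0 q e : @liftq q e 0 = 0 :> Ch e. Proof. exact: linear0. Qed.
Lemma kd_mulch p i e e' e'' cf (g : Ch e) :
  kd p i e' e'' (mulch cf e e' g) = mulch cf e' e'' (kd p i e e' g).
Proof.
apply/ffunP => G; rewrite !ffunE; case: ifP => _; last by rewrite mul0mx.
rewrite mulmx_suml; apply: eq_bigr => t _.
by rewrite ffunE -scalemxAl -!mulmxA Ymx_comm.
Qed.

Lemma kdp0 i e e' (x : Ch e) : kd 0 i e e' x = 0.
Proof.
apply/ffunP => G; rewrite !ffunE; case: ifP => // _.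
by apply: big1 => t /andP []; rewrite ltn0.
Qed.

Lemma kd2 p i e e' e'' (x : Ch e) : (p <= n)%N ->
  kd p i e' e'' (kd p i.+1 e e' x) = 0.
Proof.
elim: p i e e' e'' x => [|p IH] i e e' e'' x pn; first by rewrite kdp0.
case: i => [|j]; first by apply/ffunP => G; rewrite !ffunE.
have pn' : (p < n)%N by [].
pose q := Ordinal pn'.
have hq : nat_of_ord q = p by [].
rewrite -[kd p.+1 j.+2 e e' x]kd_chproj.
set f := chproj p.+1 j.+2 e x.
have fK : f \in Kch p.+1 j.+2 e by exact: chproj_K.
set g := piq q f.
have gK : g \in Kch p j.+1 e by exact: (piq_K hq).
rewrite (DF hq e' fK).
set df := (X in kd _ _ _ _ X).
have dfK : df \in Kch p.+1 j.+1 e'.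
  by rewrite /df -(DF hq e' fK); exact: kd_K.
rewrite (DF hq e'' dfK).
have ->: chproj p j.+1 e' df = kd p j.+2 e e' (chproj p j.+2 e f) + (-1) ^+ j.+1 *: mulch (C q) e e' g.
  rewrite /df !chprojD chprojZ (chproj_lift hq) addr0.
  rewrite [chproj p j.+1 e' (kd _ _ _ _ _)]chprojK; last exact: kd_K.
  rewrite [chproj p j.+1 e' (mulch _ _ _ _)]chprojK //; exact: mulch_K gK.
have ->: piq q df = kd p j.+1 e e' g.
  rewrite /df !piqD piqZ (piq_K0 hq (kd_K _ _ _ _)).
  rewrite (piq_K0 hq (mulch_K _ _ gK)) scaler0 addr0 add0r.
  by apply: piq_lift => G qG; rewrite (K_noq hq (kd_K _ _ _ _)).
rewrite kdD kdZ IH ?(ltnW pn') // add0r kd_mulch.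
rewrite IH ?(ltnW pn') // liftq0 addr0 exprS mulN1r scaleNr addNr.
by [].
Qed.
Definition Zg p i s t : {vspace Ch s} :=
  (lker (linfun (kd p i s t)) :&: Kch p i s)%VS.
Definition Bg p i s0 s : {vspace Ch s} :=
  (linfun (kd p i.+1 s0 s) @: Kch p i.+1 s0)%VS.
Definition Ym cf s t : 'Hom(Ch s, Ch t) := linfun (mulch cf s t).

Lemma memZ p i s t (x : Ch s) : (x \in Zg p i s t) = (kd p i s t x == 0) && (x \in Kch p i s).
Proof. by rewrite memv_cap memv_ker lfunE. Qed.

Lemma memBP p i s0 s (x : Ch s) :
  reflect (exists2 z, z \in Kch p i.+1 s0 & x = kd p i.+1 s0 s z) (x \in Bg p i s0 s).
Proof.
apply: (iffP memv_imgP) => [[z zK ->]|[z zK ->]]; exists z; by rewrite ?lfunE.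
Qed.

Lemma memYP cf s t (U : {vspace Ch s}) (x : Ch t) :
  reflect (exists2 z, z \in U & x = mulch cf s t z) (x \in Ym cf s t @: U)%VS.
Proof.
apply: (iffP memv_imgP) => [[z zK ->]|[z zK ->]]; exists z; by rewrite ?lfunE.
Qed.

Lemma BsubZ p j s0 s t : (p <= n)%N -> (Bg p j s0 s <= Zg p j s t)%VS.
Proof.
move=> pn; apply/subvP => x /memBP [z zK ->].
by rewrite memZ kd2 // eqxx kd_K.
Qed.

Lemma YZsubZ p j s0 s t cf : (Ym cf s0 s @: Zg p j s0 s <= Zg p j s t)%VS.
Proof.
apply/subvP => x /memYP [z]; rewrite memZ => /andP [/eqP dz zK] ->.
by rewrite memZ kd_mulch dz mulch0 eqxx mulch_K.
Qed.

Lemma YBsubB p j s0 s t cf (x : Ch s) : x \in Bg p j s0 s -> mulch cf s t x \in Bg p j s t.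
Proof.
case/memBP => z zK ->; apply/memBP; exists (mulch cf s0 s z); first exact: mulch_K.
by rewrite kd_mulch.
Qed.

Lemma dim_preim (aT rT : vectType K) (f : 'Hom(aT, rT)) (U : {vspace aT}) (V : {vspace rT}) :
  (\dim (U :&: f @^-1: V) + \dim (f @: U + V) = \dim U + \dim V)%N.
Proof.
have h1 := limg_ker_dim f (U :&: f @^-1: V).
have h2 := limg_ker_dim f U.
have e1 : ((U :&: f @^-1: V) :&: lker f = U :&: lker f)%VS.
  apply/vspaceP => x; rewrite !memv_cap -memv_preim memv_ker.
  by case: (f x =P 0) => [->|]; rewrite ?mem0v ?andbT ?andbF.
have e2 : (f @: (U :&: f @^-1: V) = f @: U :&: V)%VS.
  apply/vspaceP => y; rewrite memv_cap; apply/memv_imgP/andP.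
    case=> x; rewrite memv_cap -memv_preim => /andP [xU fxV] ->.
    by rewrite memv_img.
  case=> /memv_imgP [x xU ->] fxV; exists x => //.
  by rewrite memv_cap xU -memv_preim.
have h3 := dimv_sum_cap (f @: U) V.
rewrite e1 e2 in h1.
lia.
Qed.
Section Q3.
Variables (p : nat) (q : 'I_n).
Hypothesis hq : nat_of_ord q = p.

Lemma piq_DF i s0 s (z : Ch s0) : z \in Kch p.+1 i.+1 s0 ->
  piq q (kd p.+1 i.+1 s0 s z) = kd p i s0 s (piq q z).
Proof.
move=> zK; rewrite (DF hq s zK) !piqD piqZ (piq_K0 hq (kd_K _ _ _ _)).
rewrite (piq_K0 hq (mulch_K _ _ (piq_K hq zK))) scaler0 addr0 add0r.
by apply: piq_lift => G qG; rewrite (K_noq hq (kd_K _ _ _ _)).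
Qed.

Lemma chproj_DF i s0 s (z : Ch s0) : z \in Kch p.+1 i.+1 s0 ->
  chproj p i s (kd p.+1 i.+1 s0 s z) =
  kd p i.+1 s0 s (chproj p i.+1 s0 z) + (-1) ^+ i *: mulch (C q) s0 s (piq q z).
Proof.
move=> zK; rewrite (DF hq s zK) !chprojD chprojZ (chproj_lift hq) addr0.
rewrite [chproj p i s (kd _ _ _ _ _)]chprojK; last exact: kd_K.
rewrite [chproj p i s (mulch _ _ _ _)]chprojK //; apply: mulch_K; exact: (piq_K hq zK).
Qed.

Lemma Za i s t : (Zg p.+1 i.+1 s t :&: lker (linfun (@piq q s)))%VS = Zg p i.+1 s t.
Proof.
apply/vspaceP => x; rewrite memv_cap !memZ memv_ker lfunE /=.
apply/idP/idP.
  case/andP => /andP [/eqP d0 xK] /eqP px.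
  have xe : x = chproj p i.+1 s x by rewrite {1}(decomp hq xK) px liftq0 addr0.
  rewrite xe chproj_K andbT; move: d0.
  by rewrite (DF hq t xK) px kd0 liftq0 mulch0 scaler0 !addr0 kd_chproj => ->.
case/andP => /eqP d0 xK; rewrite (piq_K0 hq xK) eqxx andbT (K_S xK) andbT.
by rewrite (DF hq t (K_S xK)) (piq_K0 hq xK) kd0 liftq0 mulch0 scaler0 !addr0 kd_chproj d0.
Qed.

Lemma Zb i s t : (linfun (@piq q s) @: Zg p.+1 i.+1 s t)%VS =
  (Zg p i s t :&: Ym (C q) s t @^-1: Bg p i s t)%VS.
Proof.
apply/vspaceP => g; apply/memv_imgP/idP.
  case=> u; rewrite memZ => /andP [/eqP du uK] ->; rewrite lfunE /=.
  rewrite memv_cap memZ -memv_preim lfunE /= (piq_K hq uK) andbT.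
  have h1 := chproj_DF t uK; rewrite du chproj0 in h1.
  have h2 := piq_DF t uK; rewrite du piq0 in h2.
  rewrite -h2 eqxx /=; apply/memBP.
  exists (- ((-1) ^+ i *: chproj p i.+1 s u)).
    by rewrite memvN memvZ // chproj_K.
  rewrite kdN kdZ.
  have hM : (-1) ^+ i *: mulch (C q) s t (piq q u) = - kd p i.+1 s t (chproj p i.+1 s u).
    apply/eqP; rewrite -subr_eq0 opprK addrC -h1; by [].
  by rewrite -(signrZK i (mulch (C q) s t (piq q u))) hM scalerN.
rewrite memv_cap memZ -memv_preim lfunE /= => /andP [/andP [/eqP dg gK] /memBP [h hK yh]].
exists (liftq q g - (-1) ^+ i *: h).
  rewrite memZ; have uK : liftq q g - (-1) ^+ i *: h \in Kch p.+1 i.+1 s.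
    by rewrite memvB ?(lift_K hq) // memvZ // K_S.
  rewrite uK andbT (DF hq t uK) chprojB chprojZ (chproj_lift hq) !piqB !piqZ.
  rewrite (chprojK hK) (piq_K0 hq hK) scaler0 subr0 piq_lift; last first.
    by move=> G qG; rewrite (K_noq hq gK).
  by rewrite dg liftq0 addr0 sub0r kdN kdZ yh addrC subrr.
rewrite lfunE /= piqB piqZ (piq_K0 hq hK) scaler0 subr0 piq_lift //.
by move=> G qG; rewrite (K_noq hq gK).
Qed.

Lemma Bc i s0 s : (linfun (@piq q s) @: Bg p.+1 i.+1 s0 s)%VS = Bg p i s0 s.
Proof.
apply/vspaceP => w; apply/memv_imgP/memBP.
  case=> x /memBP [z zK ->] ->; rewrite lfunE /= (piq_DF s zK).
  by exists (piq q z) => //; exact: (piq_K hq zK).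
case=> g gK ->; exists (kd p.+1 i.+2 s0 s (liftq q g)).
  by apply/memBP; exists (liftq q g) => //; exact: (lift_K hq gK).
rewrite lfunE /= (piq_DF s (lift_K hq gK)) piq_lift //.
by move=> G qG; rewrite (K_noq hq gK).
Qed.

Lemma Bd i s0 s : (Bg p.+1 i.+1 s0 s :&: lker (linfun (@piq q s)))%VS =
  (Bg p i.+1 s0 s + Ym (C q) s0 s @: Zg p i.+1 s0 s)%VS.
Proof.
apply/vspaceP => x; rewrite memv_cap memv_ker lfunE /=; apply/idP/idP.
  case/andP => /memBP [z zK ->]; rewrite (piq_DF s zK) => /eqP dg.
  rewrite (DF hq s zK) dg liftq0 addr0; apply: memv_add.
    by apply/memBP; exists (chproj p i.+2 s0 z) => //; exact: chproj_K.
  apply/memYP; exists ((-1) ^+ i.+1 *: piq q z); last by rewrite mulchZ.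
  by rewrite memvZ // memZ dg eqxx (piq_K hq zK).
case/memv_addP => a /memBP [z1 z1K ->] [b /memYP [g]].
rewrite memZ => /andP [/eqP dg gK] -> ->.
set c := (-1) ^+ i.+1 : K.
have zK : z1 + c *: liftq q g \in Kch p.+1 i.+2 s0.
  by rewrite memvD ?memvZ //; [exact: K_S | exact: (lift_K hq gK)].
apply/andP; split.
  apply/memBP; exists (z1 + c *: liftq q g) => //.
  rewrite (DF hq s zK) chprojD chprojZ (chprojK z1K) (chproj_lift hq) !piqD !piqZ.
  rewrite scaler0 addr0 (piq_K0 hq z1K) add0r piq_lift; last first.
    by move=> G qG; rewrite (K_noq hq gK).
  by rewrite kdZ dg scaler0 liftq0 addr0 mulchZ signrZK.
rewrite piqD (piq_K0 hq (kd_K _ _ _ _)) add0r.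
by rewrite (piq_K0 hq (mulch_K _ _ gK)).
Qed.

End Q3.
Definition hAt p i s t s0 := (\dim (Zg p i s t) - \dim (Bg p i s0 s))%N.
Definition dAt cf b a s0 s u :=
  (\dim (Ym cf s0 s @: Zg b a s0 u + Bg b a s0 s) - \dim (Bg b a s0 s))%N.

Section Q4.
Variables (p : nat) (q : 'I_n).
Hypothesis hq : nat_of_ord q = p.
Hypothesis pn : (p < n)%N.

Lemma rec_hAt i s0 s t :
  (hAt p.+1 i.+1 s t s0)%:Z =
    (hAt p i.+1 s t s0)%:Z - (dAt (C q) p i.+1 s0 s s)%:Z
    + ((hAt p i s t s0)%:Z - (dAt (C q) p i s t t)%:Z).
Proof.
have pn' : (p <= n)%N := ltnW pn.
have dZ := limg_ker_dim (linfun (@piq q s)) (Zg p.+1 i.+1 s t).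
rewrite Za // Zb // in dZ.
have dB := limg_ker_dim (linfun (@piq q s)) (Bg p.+1 i.+1 s0 s).
rewrite Bd // Bc // addvC in dB.
have dW := dim_preim (Ym (C q) s t) (Zg p i s t) (Bg p i s t).
have i0 : (\dim (Bg p.+1 i.+1 s0 s) <= \dim (Zg p.+1 i.+1 s t))%N.
  by apply: dimvS; apply: BsubZ.
have i1 : (\dim (Bg p i.+1 s0 s) <= \dim (Ym (C q) s0 s @: Zg p i.+1 s0 s + Bg p i.+1 s0 s))%N.
  by apply: dimvS; apply: addvSr.
have i2 : (\dim (Ym (C q) s0 s @: Zg p i.+1 s0 s + Bg p i.+1 s0 s) <= \dim (Zg p i.+1 s t))%N.
  by apply: dimvS; rewrite subv_add YZsubZ BsubZ.
have i3 : (\dim (Bg p i s0 s) <= \dim (Zg p i s t :&: Ym (C q) s t @^-1: Bg p i s t))%N.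
  apply: dimvS; apply/subvP => x xB; rewrite memv_cap -memv_preim lfunE /=.
  by rewrite (subvP (BsubZ _ _ _ _ pn') _ xB) (YBsubB _ _ xB).
have i4 : (\dim (Bg p i s t) <= \dim (Ym (C q) s t @: Zg p i s t + Bg p i s t))%N.
  by apply: dimvS; apply: addvSr.
have i5 : (\dim (Bg p i s0 s) <= \dim (Zg p i s t))%N.
  by apply: dimvS; apply: BsubZ.
have i6 : (\dim (Bg p i.+1 s0 s) <= \dim (Zg p i.+1 s t))%N.
  by apply: dimvS; apply: BsubZ.
rewrite /hAt /dAt.
set a1 := \dim (Zg p.+1 i.+1 s t) in dZ i0 *.
set a2 := \dim (Bg p.+1 i.+1 s0 s) in dB i0 *.
set a3 := \dim (Zg p i.+1 s t) in dZ i2 i6 *.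
set a4 := \dim (Zg p i s t :&: _) in dZ dW i3 *.
set a5 := \dim (Ym (C q) s0 s @: _ + _) in dB i1 i2 *.
set a6 := \dim (Bg p i s0 s) in dB i3 i5 *.
set a7 := \dim (Ym (C q) s t @: _ + _) in dW i4 *.
set a8 := \dim (Zg p i s t) in dW i5 *.
set a9 := \dim (Bg p i s t) in dW i4 *.
set a10 := \dim (Bg p i.+1 s0 s) in i1 i6 *.
lia.
Qed.
End Q4.
Definition idealAt p1 r t : {vspace 'rV[K]_(m t)} :=
  (\sum_(t0 < n | (t0 < p1.-1)%N) limg (linfun (mulmxr (Y (C t0) r t))))%VS.

Definition phi s (v : 'rV[K]_(m s)) : Ch s :=
  [ffun F : {set 'I_n} => if F == set0 then v else 0].

Lemma phi_lin s : linear (@phi s).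
Proof.
move=> a u v; apply/ffunP => F; rewrite !ffunE; case: ifP => _ //.
by rewrite scaler0 addr0.
Qed.
HB.instance Definition _ (s : int) := GRing.isLinear.Build K 'rV[K]_(m s) (Ch s) _ (@phi s) (@phi_lin s).

Lemma phi_inj s : injective (@phi s).
Proof. by move=> u v /ffunP /(_ set0); rewrite !ffunE eqxx. Qed.

Lemma phi_ker s : lker (linfun (@phi s)) = 0%VS.
Proof.
apply/eqP/lker0P => u v; rewrite !lfunE; exact: phi_inj.
Qed.

Lemma dim_phi s (U : {vspace 'rV[K]_(m s)}) : \dim (linfun (@phi s) @: U) = \dim U.
Proof. by apply: limg_dim_eq; rewrite phi_ker capv0. Qed.

Lemma mulch_phi cf s t v : mulch cf s t (phi v) = phi (v *m Y cf s t).
Proof.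
by apply/ffunP => F; rewrite !ffunE; case: ifP => _ //; rewrite mul0mx.
Qed.

Lemma K0_phi p s (x : Ch s) : x \in Kch p 0 s -> x = phi (x set0).
Proof.
move/memKP => H; apply/ffunP => F; rewrite ffunE; case: eqP => [->|/eqP F0] //.
by rewrite H // goodF0.
Qed.

Lemma phi_K0 p s v : phi v \in Kch p 0 s.
Proof.
apply/memKP => F; rewrite goodF0 ffunE => /negbTE ->; by [].
Qed.

Lemma kd1_phi p s0 s (z : Ch s0) :
  kd p 1 s0 s z = phi (\sum_(t0 < n | (t0 < p)%N) z [set t0] *m Y (C t0) s0 s).
Proof.
apply/ffunP => G; rewrite !ffunE /= goodF0; case: eqP => // ->.
apply: eq_big => [t|t _]; first by rewrite inE andbT.
by rewrite setU0 (_ : [set s1 in set0 | _] = set0) ?cards0 ?scale1r //; apply/setP => x; rewrite !inE.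
Qed.

Lemma Bg0 p s0 s : Bg p 0 s0 s = (linfun (@phi s) @: idealAt p.+1 s0 s)%VS.
Proof.
apply/vspaceP => x; apply/memBP/memv_imgP.
  case=> z zK ->; rewrite kd1_phi; eexists; last by rewrite lfunE.
  apply: memv_sumr => t0 _; rewrite -[_ *m _](lfunE (mulmxr (Y (C t0) s0 s))).
  by apply: memv_img; exact: memvf.
case=> w /memv_sumP [vs vsH ->] ->.
pose f (t0 : 'I_n) : 'Hom('rV[K]_(m s0), 'rV[K]_(m s)) := linfun (mulmxr (Y (C t0) s0 s)).
pose u (t0 : 'I_n) := (f t0)^-1%VF (vs t0).
exists [ffun F : {set 'I_n} => \sum_(t0 < n | (t0 < p)%N && (F == [set t0])) u t0].
  apply/memKP => F nF; rewrite ffunE big1 // => t0 /andP [tp /eqP FE].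
  by move: nF; rewrite FE /goodF sub1set inE tp cards1.
rewrite kd1_phi lfunE /=; congr (phi _); apply: eq_bigr => t0 tp.
rewrite ffunE (big_pred1 t0); last first.
  move=> t1 /=; rewrite (inj_eq set1_inj) eq_sym; case: eqP => [->|]; by rewrite ?tp ?andbF.
have h := limg_lfunVK (vsH t0 tp); by rewrite -{1}h /u /f lfunE.
Qed.

Lemma Zg0 p s t : Zg p 0 s t = Kch p 0 s.
Proof.
apply/vspaceP => x; rewrite memZ.
have -> : kd p 0 s t x = 0 by apply/ffunP => G; rewrite !ffunE.
by rewrite eqxx.
Qed.

Lemma W0 p cf s t :
  (Zg p 0 s t :&: Ym cf s t @^-1: Bg p 0 s t)%VS =
  (linfun (@phi s) @: (linfun (mulmxr (Y cf s t)) @^-1: idealAt p.+1 s t))%VS.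
Proof.
apply/vspaceP => x; rewrite memv_cap Zg0 -memv_preim lfunE /= Bg0.
apply/andP/memv_imgP.
  case=> xK; rewrite (K0_phi xK) mulch_phi => /memv_imgP [w wI].
  rewrite lfunE /= => /phi_inj ew.
  exists (x set0); last by rewrite lfunE.
  by rewrite -memv_preim lfunE /= ew.
case=> v; rewrite -memv_preim lfunE /= => vI ->; rewrite lfunE /=.
split; first exact: phi_K0.
rewrite mulch_phi -[phi _](lfunE (@phi t)); exact: memv_img.
Qed.

Lemma alpha0 p cf s0 s t : (p <= n)%N ->
  (hAt p 0 s t s0)%:Z - (dAt cf p 0 s t t)%:Z =
  (\dim (linfun (mulmxr (Y cf s t)) @^-1: idealAt p.+1 s t))%:Z
  - (\dim (idealAt p.+1 s0 s))%:Z.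
Proof.
move=> pn.
have dW := dim_preim (Ym cf s t) (Zg p 0 s t) (Bg p 0 s t).
rewrite W0 dim_phi in dW.
have dB0 : \dim (Bg p 0 s0 s) = \dim (idealAt p.+1 s0 s) by rewrite Bg0 dim_phi.
have i4 : (\dim (Bg p 0 s t) <= \dim (Ym cf s t @: Zg p 0 s t + Bg p 0 s t))%N.
  by apply: dimvS; apply: addvSr.
have i5 : (\dim (Bg p 0 s0 s) <= \dim (Zg p 0 s t))%N.
  by apply: dimvS; apply: BsubZ.
rewrite /hAt /dAt.
set a1 := \dim (Zg p 0 s t) in dW i5 *.
set a2 := \dim (Bg p 0 s0 s) in dB0 i5 *.
set a3 := \dim (Bg p 0 s t) in dW i4 *.
set a4 := \dim (Ym cf s t @: _ + _) in dW i4 *.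
set a5 := \dim (linfun (mulmxr _) @^-1: _) in dW *.
set a6 := \dim (idealAt p.+1 s0 s) in dB0 *.
lia.
Qed.

Lemma ycoefE (q : 'I_n) : ycoef C (nat_of_ord q) = C q.
Proof. by rewrite /ycoef valK. Qed.

Lemma ideal_sub p1 cf r s t :
  (idealAt p1 r s <= linfun (mulmxr (Y cf s t)) @^-1: idealAt p1 s t)%VS.
Proof.
apply/subv_sumP => t0 tp; apply/subvP => x /memv_imgP [v _ ->].
rewrite -memv_preim !lfunE /= -mulmxA Ymx_comm mulmxA.
apply: (subvP (sumv_sup t0 tp (subvv _))).
rewrite -[_ *m _](lfunE (mulmxr (Y (C t0) s t))); apply: memv_img; exact: memvf.
Qed.

Lemma hK_hAt p i j : hK X C p i j = hAt p i (j - i%:Z) (j - i%:Z + 1) (j - i%:Z - 1).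
Proof. by []. Qed.

Lemma delta_dAt a b c :
  delta X C a b c = dAt (ycoef C b) b a (c - a%:Z - 1) (c - a%:Z) (c - a%:Z - 1 + 1).
Proof. by []. Qed.

Lemma alpha_int p1 j :
  (alpha X C p1 j)%:Z =
  (\dim (linfun (mulmxr (Y (ycoef C p1.-1) j (j + 1))) @^-1: idealAt p1 j (j + 1)))%:Z
  - (\dim (idealAt p1 (j - 1) j))%:Z.
Proof.
rewrite /alpha /idealM -/(idealAt p1 (j + 1 - 1) (j + 1)) -/(idealAt p1 (j - 1) j).
rewrite addrK subzn //; apply: dimvS; exact: ideal_sub.
Qed.

Lemma Hrec p i k : (p < n)%N ->
  (hK X C p.+1 i.+1 (i.+1 + k)%N%:Z)%:Z =
    (hK X C p i.+1 (i.+1 + k)%N%:Z)%:Z - (delta X C i.+1 p (i.+1 + k)%N%:Z)%:Z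
    + (if i is i'.+1 then (hK X C p i (i + k)%N%:Z)%:Z - (delta X C i p (i + k).+1%:Z)%:Z
       else (alpha X C p.+1 k%:Z)%:Z).
Proof.
move=> pn; pose q := Ordinal pn.
have hq : nat_of_ord q = p by [].
have E1 : (i.+1 + k)%N%:Z - i.+1%:Z = k%:Z by rewrite PoszD addrC addKr.
rewrite !hK_hAt !delta_dAt E1 (rec_hAt hq pn) subrK.
rewrite -[in ycoef C p]hq ycoefE.
case: i E1 => [|i] E1.
  rewrite alpha0; last exact: ltnW.
  rewrite alpha_int /= -[in ycoef C p]hq ycoefE.
  by [].
have E2 : (i.+1 + k)%N%:Z - i.+1%:Z = k%:Z by rewrite PoszD addrC addKr.
have E3 : (i.+1 + k).+1%:Z - i.+1%:Z = k%:Z + 1.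
  by rewrite -addn1 -addnA PoszD addrC addKr PoszD.
by rewrite E2 E3 addrK.
Qed.

Lemma K0i s i (x : Ch s) : x \in Kch 0 i.+1 s -> x = 0.
Proof.
move/memKP => H; apply/ffunP => F; rewrite ffunE; apply: H.
apply/negP => /andP [/subsetP sF /eqP cF].
have F0 : F = set0.
  by apply/setP => t; rewrite inE; apply/negbTE/negP => /sF; rewrite inE ltn0.
by move: cF; rewrite F0 cards0.
Qed.

Lemma Z00 a s t : Zg 0 a.+1 s t = 0%VS.
Proof.
apply/vspaceP => x; rewrite memv0 memv_cap; apply/andP/eqP => [[_ /K0i //]|->].
by split; apply: mem0v.
Qed.

Lemma hK0 i j : hK X C 0 i.+1 j = 0%N.
Proof. by rewrite hK_hAt /hAt Z00 dimv0. Qed.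

Lemma delta0 a c : delta X C a.+1 0 c = 0%N.
Proof. by rewrite delta_dAt /dAt Z00 limg0 add0v subnn. Qed.
End Main.

Theorem proposition1p1 (K : fieldType) (n : nat) (m : int -> nat)
  (X : forall (k : 'I_n) (e : int), 'M[K]_(m e, m (e + 1))) :
  K_infinite K -> graded_module X -> fin_generated X ->
  exists P : {mpoly K[n * n]}, P != 0 /\
    forall C : 'M[K]_n, P.@[fun t => mxvec C 0 t] != 0 ->
    forall i k p : nat, (1 <= i)%N -> (1 <= p <= n)%N ->
      ((hK X C p i (i + k)%N%:Z)%:Z =
        (\sum_(1 <= j < p.+2 - i) ('C(p - j, i - 1) * alpha X C j k%:Z)%N%:Z)
        - (\sum_(1 <= b < p) \sum_(maxn (i + b - p) 1 <= a < i.+1)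
            (binz (p - b - 1) (i%:Z - a%:Z) * delta X C a b (a + k)%N%:Z
             + binz (p - b - 1) (i%:Z - a%:Z - 1) * delta X C a b (a + k).+1%:Z)%N%:Z))%R.
Proof.
move=> _ gmX _; exists 1; split; first exact: oner_neq0.
move=> C _ i k p; case: i => // i _ /andP [_ pn].
have hc := @comb (fun j => alpha X C j k%:Z) (fun a b => delta X C a b (a + k)%N%:Z)
  (fun a b => delta X C a b (a + k).+1%:Z) n (fun p i => hK X C p i (i + k)%N%:Z).
rewrite /= in hc.
rewrite hc //; first last.
- move=> p' [|i'] pn'; [exact: (Hrec gmX C 0 k pn') | exact: (Hrec gmX C i'.+1 k pn')].
- move=> i'; exact: hK0.
rewrite /Gc; congr (_ - _).
  exact: (esym (SA_GA _ _ _)).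
apply: esym; apply: SD_GD => a; exact: delta0.
Qed.
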